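(* Let $G$ be a graph, let $k\ge 1$ and $d\ge 0$ be integers, and let $\mathcal M$ be a family of non-trivial vertex-disjoint paths in $G$ which is a size-minimum $(d,k)$-extension of itself. Then: (1) no path in $\mathcal M$ has length less than $2k-1$; and (2) for every two distinct paths $P_1,P_2\in\mathcal M$, every vertex $x$ in the $k$-end of $P_1$, every vertex $y$ in the $k$-end of $P_2$, every $a\in N(x)\setminus V(\mathcal M)$ and every $b\in N(y)\setminus V(\mathcal M)$, there is no $ab$-path of length at most $d$ in $G-V(\mathcal M)$.
   Context: A path is non-trivial if its length (number of edges) is at least $1$. For a family $\mathcal M$ of vertex-disjoint paths, $|\mathcal M|$ is the number of paths, $V(\mathcal M)$ the union of their vertex sets and $E(\mathcal M)$ the union of their edge sets. The $k$-end of a path is the set of (at most $2k$) vertices of the path at distance at most $k-1$ along the path from one of its two endpoints (endpoints included). Given a family $\mathcal M$ of non-trivial vertex-disjoint paths, a family $\mathcal M'$ of non-trivial vertex-disjoint paths is a $(d,k)$-extension of $\mathcal M$ if $\mu:=|\mathcal M|-|\mathcal M'|\ge 0$, $|E(\mathcal M)\setminus E(\mathcal M')|\le 2(k-1)\mu$ and $|E(\mathcal M')\setminus E(\mathcal M)|\le (d+2)\mu$. $\mathcal M'$ is a size-minimum $(d,k)$-extension of $\mathcal M$ if it is a $(d,k)$-extension of $\mathcal M$ and every $(d,k)$-extension $\mathcal M''$ of $\mathcal M$ satisfies $|\mathcal M''|\ge|\mathcal M'|$. $N(x)$ denotes the set of neighbors of $x$. *)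

(* Defs.v *)
From mathcomp Require Import all_boot.
Set Implicit Arguments. Unset Strict Implicit. Unset Printing Implicit Defensive.

(* A (finite, simple) graph: vertex type T : finType, adjacency e : rel T,
   assumed symmetric and irreflexive in the theorem. *)

Section Defs.
Variables (T : finType) (e : rel T).

Definition gpath (p : seq T) : bool :=
  if p is x :: s then path e x s && uniq p else false.

Definition plen (p : seq T) : nat := (size p).-1.

Definition ntpath (p : seq T) : bool := gpath p && (1 <= plen p).

Definition pedges (p : seq T) : {set {set T}} :=
  [set [set xy.1; xy.2] | xy in zip p (behead p)].

Definition disjoint_pathfam (M : seq (seq T)) : bool :=
  all ntpath M && pairwise (fun p q => [disjoint p & q]) M.

Definition VM (M : seq (seq T)) : {set T} := [set x | has (fun p => x \in p) M].
Definition EM (M : seq (seq T)) : {set {set T}} := \bigcup_(p <- M) pedges p.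

Definition extension (d k : nat) (M M' : seq (seq T)) : bool :=
  let mu := size M - size M' in
  [&& disjoint_pathfam M', size M' <= size M,
      #|EM M :\: EM M'| <= 2 * (k - 1) * mu &
      #|EM M' :\: EM M| <= (d + 2) * mu].

Definition size_min_extension (d k : nat) (M M' : seq (seq T)) : Prop :=
  extension d k M M' /\ forall M'', extension d k M M'' -> size M' <= size M''.

(* k-end of a path p: vertices at distance <= k-1 along p from an endpoint *)
Definition kend (k : nat) (p : seq T) : {set T} :=
  [set x in p | (index x p < k) || (size p - index x p <= k)].

Definition short_path_avoiding (X : {set T}) (d : nat) (a b : T) : Prop :=
  exists q : seq T, [/\ gpath q, head a q = a, last a q = b, plen q <= d &
                        all (fun v => v \notin X) q].
End Defs.

(* Main.v *)
Require Import Defs.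
From mathcomp Require Import all_boot zify.
Set Implicit Arguments. Unset Strict Implicit. Unset Printing Implicit Defensive.

Section L.
Variables (T : finType) (e : rel T).

Lemma pedges_nil : pedges (T:=T) [::] = set0.
Proof. by apply/setP=> E; rewrite inE; apply/imsetP => -[xy]. Qed.

Lemma pedges1 (x : T) : pedges [:: x] = set0.
Proof. by apply/setP=> E; rewrite inE; apply/imsetP => -[xy]. Qed.

Lemma pedges_cons2 (x y : T) s :
  pedges [:: x, y & s] = [set x; y] |: pedges (y :: s).
Proof.
apply/setP=> E; rewrite !inE /pedges /=.
apply/imsetP/idP.
  case=> xy; rewrite inE => /orP[/eqP -> -> | H ->]; first by rewrite eqxx.
  by apply/orP; right; apply/imsetP; exists xy.
case/orP=> [/eqP -> | /imsetP [xy H ->]]; first by exists (x, y); rewrite ?inE ?eqxx.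
by exists xy; rewrite // inE H orbT.
Qed.

Lemma pedges_cat (x : T) s y t :
  pedges ((x :: s) ++ y :: t) = pedges (x :: s) :|: ([set last x s; y] |: pedges (y :: t)).
Proof.
elim: s x => [|z s IH] x /=; first by rewrite pedges_cons2 pedges1 set0U.
by rewrite pedges_cons2 IH pedges_cons2 setUA.
Qed.

Lemma pedges_split s (x : T) t :
  pedges (s ++ x :: t) = pedges (rcons s x) :|: pedges (x :: t).
Proof.
case: s => [|h s] /=; first by rewrite pedges1 set0U.
rewrite -cats1 -cat_cons pedges_cat pedges_cat pedges1 setU0.
by rewrite setUA.
Qed.

Lemma pedges_rev (p : seq T) : pedges (rev p) = pedges p.
Proof.
elim: p => [|x [|y s] IH]; first by [].
  by [].
rewrite (rev_cons x).
case Er: (rev (y :: s)) IH => [|z w] IH.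
  by move: (f_equal size Er); rewrite size_rev.
have Hl : last z w = y by rewrite -(last_cons x) -Er rev_cons last_rcons.
rewrite -cats1 pedges_cat pedges1 setU0 Hl IH pedges_cons2.
by rewrite setUC [[set y; x]]setUC.
Qed.

Lemma card_pedges (p : seq T) : #|pedges p| <= plen p.
Proof.
elim: p => [|x [|y s] IH]; first by rewrite pedges_nil cards0.
  by rewrite pedges1 cards0.
rewrite pedges_cons2 /plen /=; rewrite cardsU1.
move: IH; rewrite /plen /= => IH.
by rewrite -add1n leq_add // leq_b1.
Qed.

Lemma gpath_rev (p : seq T) : symmetric e -> gpath e p -> gpath e (rev p).
Proof.
move=> se; case: p => [|x s] // /andP[Hp Hu].
have Hr : rev (x :: s) = last x s :: rev (belast x s) by rewrite lastI rev_rcons.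
rewrite Hr /gpath; apply/andP; split; last by rewrite -Hr rev_uniq.
have -> : path e (last x s) (rev (belast x s)) = path (fun z => e^~ z) x s by rewrite rev_path.
by rewrite (eq_path (e':=e)) // => a b; rewrite se.
Qed.

Lemma gpath_splitl p1 (x : T) p2 : gpath e (p1 ++ x :: p2) -> gpath e (rcons p1 x).
Proof.
case: p1 => [|h p1] //= /andP[Hp Hu].
rewrite -cats1 cat_path /= andbT.
move: Hp; rewrite cat_path /= => /and3P[-> -> _] /=.
have Ht : h :: p1 ++ [:: x] = take (size p1).+2 (h :: p1 ++ x :: p2).
  by rewrite /= take_cat ltnNge leqnSn /= subSnn /= take0.
have Hu' : uniq (h :: p1 ++ x :: p2) := Hu.
by have := take_uniq (size p1).+2 Hu'; rewrite -Ht.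
Qed.

Lemma gpath_splitr p1 (x : T) p2 : gpath e (p1 ++ x :: p2) -> gpath e (x :: p2).
Proof.
case: p1 => [|h p1] //= /andP[Hp Hu].
move: Hp; rewrite cat_path /= => /and3P[_ _ ->] /=.
by move: Hu => /andP[_]; rewrite cat_uniq => /and3P[_ _].
Qed.

Lemma gpath_join h s (y : T) t :
  gpath e (h :: s) -> gpath e (y :: t) -> e (last h s) y ->
  [disjoint (h :: s) & (y :: t)] -> gpath e ((h :: s) ++ (y :: t)).
Proof.
move=> /andP[Hp1 Hu1] /andP[Hp2 Hu2] Hl Hd.
have Hu : uniq ((h :: s) ++ (y :: t)).
  rewrite cat_uniq Hu1 Hu2 andbT /=.
  by rewrite disjoint_sym disjoint_has in Hd.
apply/andP; split => //.
by rewrite cat_path Hp1 /= Hl Hp2.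
Qed.

Lemma gpath_uniq (p : seq T) : gpath e p -> uniq p.
Proof. by case: p => // x s /andP[]. Qed.

Lemma cardUD (A B : {set {set T}}) : #|(A :|: B) :\: B| <= #|A|.
Proof.
apply: subset_leq_card; apply/subsetP => E; rewrite !inE.
by case/andP => /negbTE -> /orP[].
Qed.

Lemma cardUD' (A B : {set {set T}}) : #|(A :|: B) :\: A| <= #|B|.
Proof. by rewrite setUC cardUD. Qed.

Lemma end_seg k (P : seq T) x : symmetric e -> gpath e P -> x \in kend k P ->
  exists S, [/\ gpath e S, last x S = x, {subset S <= P},
     pedges S \subset pedges P & #|pedges P :\: pedges S| <= k - 1].
Proof.
move=> se gP; rewrite inE => /andP[xP Hk].
have uP := gpath_uniq gP.
case/splitPr: xP Hk gP uP => p1 p2 Hk gP uP.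
have xp1 : x \notin p1.
  by move: uP; rewrite cat_uniq => /and3P[_ /hasPn H _]; apply: H; rewrite inE eqxx.
move: Hk; rewrite index_cat (negbTE xp1) /= eqxx addn0 size_cat /= => Hk.
have Hsp := pedges_split p1 x p2.
case/orP: Hk => Hk.
  exists (rev (x :: p2)); split.
  - exact/gpath_rev/(gpath_splitr gP).
  - by rewrite rev_cons last_rcons.
  - by move=> z; rewrite mem_rev => zin; rewrite mem_cat zin orbT.
  - by rewrite pedges_rev Hsp subsetUr.
  rewrite pedges_rev Hsp; apply: leq_trans (cardUD _ _) _.
  apply: leq_trans (card_pedges _) _.
  by rewrite /plen size_rcons /=; move: Hk; case: k => // k; rewrite ltnS subn1.
exists (rcons p1 x); split.
- exact: (gpath_splitl gP).
- by rewrite last_rcons.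
- by move=> z; rewrite mem_rcons inE mem_cat inE => /orP[->|->]; rewrite ?orbT.
- by rewrite Hsp subsetUl.
rewrite Hsp; apply: leq_trans (cardUD' _ _) _.
apply: leq_trans (card_pedges _) _.
rewrite /plen /=; move: Hk; lia.
Qed.

Lemma cardU_le (A B : {set {set T}}) : #|A :|: B| <= #|A| + #|B|.
Proof. by rewrite cardsU leq_subr. Qed.

Lemma card_U1_le (u : {set T}) (A : {set {set T}}) : #|u |: A| <= #|A|.+1.
Proof. by rewrite cardsU1 -add1n leq_add2r leq_b1. Qed.

Lemma EM_cons p (M : seq (seq T)) : EM (p :: M) = pedges p :|: EM M.
Proof. by rewrite /EM big_cons. Qed.

Lemma EMP E (M : seq (seq T)) :
  reflect (exists2 p, p \in M & E \in pedges p) (E \in EM M).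
Proof.
elim: M => [|p M IH]; first by rewrite /EM big_nil inE; constructor; case.
rewrite EM_cons inE; apply: (iffP orP).
  case=> [H|/IH [q qM Hq]]; first by exists p; rewrite ?inE ?eqxx.
  by exists q; rewrite // inE qM orbT.
case=> q; rewrite inE => /orP[/eqP -> | qM] Hq; first by left.
by right; apply/IH; exists q.
Qed.

Lemma EM_sub (F M : seq (seq T)) : {subset F <= M} -> EM F \subset EM M.
Proof.
move=> FM; apply/subsetP => E /EMP [p pF Hp]; apply/EMP; exists p => //.
exact: FM.
Qed.

Lemma pedges_EM p (M : seq (seq T)) : p \in M -> pedges p \subset EM M.
Proof. by move=> pM; apply/subsetP => E HE; apply/EMP; exists p. Qed.

Lemma VMP z p (M : seq (seq T)) : p \in M -> z \in p -> z \in VM M.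
Proof. by move=> pM zp; rewrite inE; apply/hasP; exists p. Qed.
End L.

Lemma disjP (T : finType) (A B : seq T) :
  reflect (forall z, z \in A -> z \in B -> False) [disjoint A & B].
Proof.
apply: (iffP idP) => [H z zA zB | H]; first by move: (disjointFr H zA); rewrite zB.
rewrite disjoint_has; apply/hasPn => z zA; apply/negP => zB; exact: H z zA zB.
Qed.

Lemma pairwise_mem2 (X : eqType) (r : rel X) (s : seq X) u v :
  symmetric r -> pairwise r s -> u \in s -> v \in s -> u != v -> r u v.
Proof.
move=> sr; elim: s => [|w s IH] //=; move=> /andP[Hw Hs].
rewrite !inE.
case: (eqVneq u w) => [->|uw] /=.
  case: (eqVneq v w) => [->|vw] /=; first by move=> _ _.
  by move=> _ vs _; apply: (allP Hw).
case: (eqVneq v w) => [->|vw] /=.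
  by move=> us _ _; rewrite sr; apply: (allP Hw).
by move=> us vs; apply: IH.
Qed.

Lemma count1 (X : eqType) (a : pred X) (s : seq X) v :
  v \in s -> (forall p, a p -> p != v) -> (count a s).+1 <= size s.
Proof.
move=> + Ha; elim: s => [|w s IH] //=; rewrite inE.
case: (eqVneq v w) => [<- _|vw /= vs].
  have -> : a v = false by apply/negP => /Ha; rewrite eqxx.
  by rewrite add0n ltnS count_size.
by move: (IH vs); case: (a w) => /=; rewrite ?add1n ?add0n ?ltnS // => H; apply: ltnW.
Qed.

Lemma count2 (X : eqType) (a : pred X) (s : seq X) u v :
  u \in s -> v \in s -> u != v -> (forall p, a p -> (p != u) && (p != v)) ->
  (count a s).+2 <= size s.
Proof.
move=> + + uv Ha; elim: s => [|w s IH] //=; rewrite !inE.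
case: (eqVneq u w) => [<- _|uw /=].
  have -> : a u = false by apply/negP => /Ha; rewrite eqxx.
  rewrite eq_sym (negbTE uv) /= => vs.
  by rewrite add0n ltnS; apply: (count1 vs) => p /Ha /andP[].
case: (eqVneq v w) => [<- us _|vw /= us vs].
  have -> : a v = false by apply/negP => /Ha; rewrite eqxx andbF.
  by rewrite add0n ltnS; apply: (count1 us) => p /Ha /andP[].
by move: (IH us vs); case: (a w) => /=; rewrite ?add1n ?add0n ?ltnS // => H; apply: ltnW.
Qed.

Theorem lemma2p3 (T : finType) (e : rel T) (k d : nat) (M : seq (seq T)) :
  symmetric e -> irreflexive e -> 1 <= k ->
  disjoint_pathfam e M ->
  size_min_extension e d k M M ->
  (forall P, P \in M -> 2 * k - 1 <= plen P) /\
  (forall P1 P2 x y a b, P1 \in M -> P2 \in M -> P1 != P2 ->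
     x \in kend k P1 -> y \in kend k P2 ->
     e x a -> a \notin VM M -> e y b -> b \notin VM M ->
     ~ short_path_avoiding e (VM M) d a b).
Proof.
move=> se ie k1 HM [_ Hmin].
case/andP: (HM) => Hall Hpw.
have gM : forall p, p \in M -> gpath e p by move=> p /(allP Hall) /andP[].
have dM : forall p q, p \in M -> q \in M -> p != q -> [disjoint p & q].
  move=> p q pM qM pq; apply: (pairwise_mem2 _ Hpw) => //.
  by move=> u v; rewrite disjoint_sym.
split.
  move=> P PM; rewrite leqNgt; apply/negP => Hlt.
  set F := [seq p <- M | p != P].
  have hsz : (size F).+1 <= size M.
    by rewrite size_filter; apply: (count1 PM) => p.
  have hmu : 1 <= size M - size F by lia.
  have : extension e d k M F.
    apply/and4P; split.
    - apply/andP; split; last exact: pairwise_filter.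
      by apply/allP => p; rewrite mem_filter => /andP[_ /(allP Hall)].
    - exact: ltnW hsz.
    - apply: (@leq_trans #|pedges P|).
        apply: subset_leq_card; apply/subsetP => E; rewrite inE => /andP[HF /EMP [p pM Hp]].
        case: (eqVneq p P) => [<- //|pP].
        by move/negP: HF; case; apply/EMP; exists p; rewrite // mem_filter pP.
      apply: leq_trans (card_pedges _) _.
      apply: (@leq_trans (2 * (k - 1))); first lia.
      exact: leq_pmulr.
    - have -> : EM F :\: EM M = set0.
        apply/setP => E; rewrite !inE; apply/negP => /andP[/negP H1 H2]; apply: H1.
        by apply: (subsetP (EM_sub _)) H2 => p; rewrite mem_filter => /andP[].
      by rewrite cards0.
  by move/Hmin; rewrite leqNgt hsz.
move=> P1 P2 x y a b P1M P2M P12 xk yk exa aV eyb bV [q [gq hq lq plq avq]].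
have [S1 [gS1 lS1 sS1 eS1 cS1]] := end_seg se (gM _ P1M) xk.
have [S2 [gS2 lS2 sS2 eS2 cS2]] := end_seg se (gM _ P2M) yk.
case: S1 gS1 lS1 sS1 eS1 cS1 => [|h1 s1] // gS1 /= lS1 sS1 eS1 cS1.
case: S2 gS2 lS2 sS2 eS2 cS2 => [|h2 s2] // gS2 /= lS2 sS2 eS2 cS2.
case: q gq hq lq plq avq => [|a' q'] // gq /= hq lq plq avq; subst a'.
set t2 := rev (belast h2 s2).
have Er : rev (h2 :: s2) = y :: t2 by rewrite /t2 lastI rev_rcons lS2.
have gT2 : gpath e (y :: t2) by rewrite -Er; apply: gpath_rev.
have sT2 : {subset (y :: t2) <= P2} by move=> z; rewrite -Er mem_rev; apply: sS2.
have eT2 : pedges (y :: t2) = pedges (h2 :: s2) by rewrite -Er pedges_rev.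
have d12 := dM _ _ P1M P2M P12.
have inV1 : forall z, z \in P1 -> z \in VM M by move=> z; apply: VMP.
have inV2 : forall z, z \in P2 -> z \in VM M by move=> z; apply: VMP.
have notq : forall z, z \in a :: q' -> z \notin VM M.
  by move: avq => /andP[_ /allP H] z; rewrite inE => /orP[/eqP -> //|/H].
set Q := (a :: q') ++ (y :: t2).
have gQ : gpath e Q.
  apply: gpath_join => //; first by rewrite lq se.
  apply/disjP => z zq zt; move: (notq _ zq); rewrite inV2 //; exact: sT2.
set J := (h1 :: s1) ++ Q.
have gJ : gpath e J.
  apply: (gpath_join (s:=s1) (y:=a) (t:=q' ++ y :: t2)) => //; first by rewrite lS1.
  apply/disjP => z z1; rewrite -/((a :: q') ++ y :: t2) mem_cat => /orP[zq|zt].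
    by move: (notq _ zq); rewrite inV1 //; apply: sS1.
  by move: (disjointFr d12 (sS1 _ z1)); rewrite (sT2 _ zt).
have HQ := pedges_cat a q' y t2.
have HJ : pedges J = pedges (h1 :: s1) :|: ([set x; a] |:
    (pedges (a :: q') :|: ([set b; y] |: pedges (y :: t2)))).
  by rewrite /J /Q pedges_cat lS1 -/((a :: q') ++ y :: t2) HQ lq.
set F := [seq p <- M | (p != P1) && (p != P2)].
have hsz : (size F).+2 <= size M.
  by rewrite size_filter; apply: (count2 P1M P2M P12) => p.
have hmu : 1 <= size M - size (J :: F) by rewrite subn_gt0.
have : extension e d k M (J :: F).
  apply/and4P; split.
  - apply/andP; split.
    + rewrite /=; apply/andP; split.
      * by rewrite /ntpath gJ /= /plen /J size_cat /= addnS.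
      * by apply/allP => p; rewrite mem_filter => /andP[_ /(allP Hall)].
    + rewrite pairwise_cons (pairwise_filter _ Hpw) andbT.
      apply/allP => p; rewrite mem_filter => /andP[/andP[p1 p2] pM].
      have d1 : [disjoint P1 & p] by apply: dM; rewrite // eq_sym.
      have d2 : [disjoint P2 & p] by apply: dM; rewrite // eq_sym.
      apply/disjP => z; rewrite /J /Q !mem_cat => /orP[z1|/orP[zq|zt]] zp.
      * by move: (disjointFr d1 (sS1 _ z1)); rewrite zp.
      * by move: (notq _ zq); rewrite (VMP pM zp).
      * by move: (disjointFr d2 (sT2 _ zt)); rewrite zp.
  - by apply: leq_trans hsz.
  - apply: (@leq_trans (2 * (k - 1))); last exact: leq_pmulr.
    apply: (@leq_trans #|(pedges P1 :\: pedges (h1 :: s1)) :|: (pedges P2 :\: pedges (h2 :: s2))|).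
      apply: subset_leq_card; apply/subsetP => E; rewrite inE => /andP[HF /EMP [p pM Hp]].
      rewrite EM_cons in HF.
      case: (eqVneq p P1) => [Ep|pP1].
        rewrite -Ep !inE Hp andbT; apply/orP; left; apply: contra HF => H.
        by rewrite in_setU HJ in_setU H.
      case: (eqVneq p P2) => [Ep|pP2].
        rewrite -Ep !inE Hp andbT; apply/orP; right; apply: contra HF => H.
        by rewrite -eT2 in H; rewrite in_setU HJ !(in_setU, in_setU1) H !orbT.
      exfalso; move/negP: HF; apply; rewrite in_setU; apply/orP; right.
      by apply/EMP; exists p; rewrite // mem_filter pP1 pP2.
    apply: leq_trans (cardU_le _ _) _.
    by rewrite mul2n -addnn leq_add.
  - apply: (@leq_trans (d + 2)); last exact: leq_pmulr.
    apply: (@leq_trans #|[set x; a] |: ([set b; y] |: pedges (a :: q'))|).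
      apply: subset_leq_card; apply/subsetP => E; rewrite inE EM_cons in_setU.
      case/andP => HM' /orP[HJE|HFE]; last first.
        have FsubM : {subset F <= M} by move=> p; rewrite mem_filter => /andP[].
        by have := subsetP (EM_sub FsubM) _ HFE; rewrite (negbTE HM').
      move: HJE; rewrite HJ !(in_setU, in_setU1).
      case/orP => [H|/orP[->//|/orP[->|/orP[->|H]]]]; rewrite ?orbT //.
        by move: (subsetP (pedges_EM P1M) _ (subsetP eS1 _ H)); rewrite (negbTE HM').
      rewrite eT2 in H.
      by move: (subsetP (pedges_EM P2M) _ (subsetP eS2 _ H)); rewrite (negbTE HM').
    apply: leq_trans (card_U1_le _ _) _; rewrite addn2 ltnS.
    apply: leq_trans (card_U1_le _ _) _; rewrite ltnS.
    exact: leq_trans (card_pedges _) plq.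
by move/Hmin => /= H; move: (leq_trans hsz H); rewrite ltnn.
Qed.
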